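(* Let $d,m\in\mathbb{N}$, $q\in[1,\infty]$, $\sigma>0$, and let $\varphi:\mathbb{R}^d\to[0,\infty)$ be a probability density with $\varphi\in L^q(\mathbb{R}^d)$. Then for every $f$ of the form $f=\sum_{i=1}^m\alpha_i\varphi_{\mu_i,\sigma}$ with $(\alpha_1,\dots,\alpha_m)\in[0,1]^m$, $\sum_i\alpha_i=1$, and $\mu_1,\dots,\mu_m\in\mathbb{R}^d$, and every $\varepsilon>0$, there is $p\in\mathsf{DBN}_\varphi(d,m,m+1)$ whose visible density satisfies $\|f-p\|_{L^q}\leq\varepsilon$.
   Context: $\varphi_{\mu,\sigma}(x)=\sigma^{-d}\varphi((x-\mu)/\sigma)$ and $\mathscr{V}_\varphi^\sigma=\{\varphi_{\mu,\sigma}:\mu\in\mathbb{R}^d\}$; the set of such $f$ is the truncated convex hull $\mathrm{cv}_m(\mathscr{V}_\varphi^\sigma)$. For $q=\infty$, $\|g\|_{L^\infty}=\sup_x|g(x)|$. Binary-binary RBM: $\mathsf{B\text{-}RBM}(m,n)$ is the set of probability measures on $\{0,1\}^m\times\{0,1\}^n$ of the form $\pi(v,h)=e^{-\mathcal{H}(v,h)}/\mathcal{Z}$ with $\mathcal{H}(v,h)=\langle v,Wh\rangle+\langle v,b\rangle+\langle h,c\rangle$, $W\in\mathbb{R}^{m\times n}$, $b\in\mathbb{R}^m$, $c\in\mathbb{R}^n$, $\mathcal{Z}=\sum_{v,h}e^{-\mathcal{H}(v,h)}$. $\mathsf{DBN}_\varphi(d,m,n)$ is the set of joint distributions $p(v,h_1,h_2)=p(v\mid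 h_1)\,\pi(h_1,h_2)$ on $\mathbb{R}^d\times\{0,1\}^m\times\{0,1\}^n$ with $\pi\in\mathsf{B\text{-}RBM}(m,n)$ and, for some $\sigma'>0$, $p(\cdot\mid h_1)\in\mathscr{V}_\varphi^{\sigma'}$ for each $h_1$; $p$ is identified with its visible density $p(v)=\sum_{h_1,h_2}p(v,h_1,h_2)$. *)

(* Defs.v *)
From HB Require Import structures.
From mathcomp Require Import all_boot all_order all_algebra.
From mathcomp Require Import all_classical all_reals all_analysis.
Set Implicit Arguments. Unset Strict Implicit. Unset Printing Implicit Defensive.
Import Order.TTheory GRing.Theory Num.Theory.
Import numFieldNormedType.Exports.
Local Open Scope classical_set_scope.
Local Open Scope ring_scope.

(* Points of R^d are d-tuples of reals.  n.-tuple R carries MathComp-Analysis'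
   product (= Borel) sigma-algebra (measure_tuple_display). *)

Section Defs.
Variable R : realType.

(* Lebesgue integral on R^n of a [0,+oo]-valued function, computed as the
   iterated one-dimensional Lebesgue integral (Tonelli).  For n = 0, R^0 is a
   point with unit mass. *)
Fixpoint iint (n : nat) : (n.-tuple R -> \bar R) -> \bar R :=
  match n return (n.-tuple R -> \bar R) -> \bar R with
  | 0 => fun g => g [tuple]
  | n'.+1 => fun g =>
      (\int[@lebesgue_measure R]_x iint (fun t : n'.-tuple R => g (cons_tuple x t)))%E
  end.

Definition LqNorm (n : nat) (q : \bar R) (g : n.-tuple R -> R) : \bar R :=
  match q with
  | r%:E => ((iint (fun x => (`|g x| `^ r)%:E)) `^ r^-1)%E
  | +oo%E => ereal_sup [set (`|g x|)%:E | x in [set: n.-tuple R]]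
  | -oo%E => 0%E
  end.

Definition shift_scale (d : nat) (phi : d.-tuple R -> R) (mu : d.-tuple R)
  (sigma : R) : d.-tuple R -> R :=
  fun x => sigma ^- d * phi [tuple (tnth x i - tnth mu i) / sigma | i < d].

Definition rbm_energy (m n : nat) (W : 'M[R]_(m, n)) (b : 'I_m -> R)
  (c : 'I_n -> R) (v : m.-tuple bool) (h : n.-tuple bool) : R :=
  \sum_(i < m) \sum_(j < n) (tnth v i)%:R * W i j * (tnth h j)%:R
  + \sum_(i < m) (tnth v i)%:R * b i + \sum_(j < n) (tnth h j)%:R * c j.

Definition rbm_partition (m n : nat) (W : 'M[R]_(m, n)) (b : 'I_m -> R)
  (c : 'I_n -> R) : R :=
  \sum_(v : m.-tuple bool) \sum_(h : n.-tuple bool) expR (- rbm_energy W b c v h).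

Definition rbm (m n : nat) (W : 'M[R]_(m, n)) (b : 'I_m -> R) (c : 'I_n -> R)
  (v : m.-tuple bool) (h : n.-tuple bool) : R :=
  expR (- rbm_energy W b c v h) / rbm_partition W b c.

Definition dbn_visible (d m n : nat) (phi : d.-tuple R -> R) (sigma' : R)
  (mu : m.-tuple bool -> d.-tuple R) (W : 'M[R]_(m, n)) (b : 'I_m -> R)
  (c : 'I_n -> R) : d.-tuple R -> R :=
  fun v => \sum_(h1 : m.-tuple bool) \sum_(h2 : n.-tuple bool)
             shift_scale phi (mu h1) sigma' v * rbm W b c h1 h2.

(* p (identified with its visible density) belongs to DBN_phi(d,m,n). *)
Definition in_DBN (d m n : nat) (phi : d.-tuple R -> R) (p : d.-tuple R -> R) :=
  exists sigma' : R, 0 < sigma' /\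
  exists (mu : m.-tuple bool -> d.-tuple R) (W : 'M[R]_(m, n))
         (b : 'I_m -> R) (c : 'I_n -> R),
    p = dbn_visible phi sigma' mu W b c.

Definition prob_density (d : nat) (phi : d.-tuple R -> R) :=
  [/\ forall x, 0 <= phi x, measurable_fun [set: d.-tuple R] phi
    & iint (fun x => (phi x)%:E) = 1%E].

End Defs.

(* Main.v *)
Require Import Defs.
From HB Require Import structures.
From mathcomp Require Import all_boot all_order all_algebra.
From mathcomp Require Import all_classical all_reals all_analysis.
From mathcomp Require Import lra ring.
Import Order.TTheory GRing.Theory Num.Theory.
Local Open Scope ring_scope.

Definition sfx {R : realType} {m} (alpha : 'I_m -> R) (i : nat) : R :=
  \sum_(k < m | (i <= k)%N) alpha k.
Definition rr {R : realType} {m} (alpha : 'I_m -> R) (k : 'I_m) : R :=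
  alpha k / sfx alpha k.

Definition stopb {R : realType} {m} (alpha : 'I_m -> R) (k : 'I_m) (b : bool) : bool :=
  if rr alpha k == 0 then false else if rr alpha k == 1 then true else b.
Definition pp {R : realType} {m} (alpha : 'I_m -> R) (k : 'I_m) : R :=
  if (0 < rr alpha k < 1) then rr alpha k else 2^-1.
Definition ww {R : realType} {m} (alpha : 'I_m -> R) (k : 'I_m) (b : bool) : R :=
  if b then pp alpha k else 1 - pp alpha k.
Definition EE {R : realType} {m} (alpha : 'I_m -> R) (i : 'I_m) (h : m.-tuple bool) : bool :=
  stopb alpha i (tnth h i) && [forall k : 'I_m, (k < i)%N ==> ~~ stopb alpha k (tnth h k)].

Lemma sum_tuple_prod (R : realType) n (Q : 'I_n -> pred bool) (F : 'I_n -> bool -> R) :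
 \sum_(t : n.-tuple bool | [forall i, Q i (tnth t i)]) \prod_i F i (tnth t i)
 = \prod_i \sum_(b | Q i b) F i b.
Proof.
rewrite bigA_distr_big_dep.
rewrite (reindex (fun f : {ffun 'I_n -> bool} => [tuple f i | i < n])) /=.
  apply: eq_big => f.
    apply/forallP/familyP => H i; have := H i; by rewrite tnth_mktuple.
  by move=> _; apply: eq_bigr => i _; rewrite tnth_mktuple.
exists (fun t : n.-tuple bool => [ffun i => tnth t i]) => x _.
  by apply/ffunP => i; rewrite ffunE tnth_mktuple.
by apply: eq_from_tnth => i; rewrite tnth_mktuple ffunE.
Qed.

Section P.
Context (R : realType) (m : nat) (alpha : 'I_m -> R).
Hypothesis a0 : forall i, 0 <= alpha i.
Hypothesis a1 : \sum_(i < m) alpha i = 1.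

Lemma sfx_ge0 i : 0 <= sfx alpha i.
Proof. by apply: sumr_ge0 => k _. Qed.

Lemma sfxS (k : 'I_m) : sfx alpha k = alpha k + sfx alpha k.+1.
Proof.
rewrite /sfx (bigD1 k) //=; congr (_ + _); apply: eq_bigl => j.
by rewrite ltn_neqAle andbC eq_sym.
Qed.

Lemma sfx0 : sfx alpha 0 = 1.
Proof. by rewrite /sfx -a1; apply: eq_bigl. Qed.

Lemma sfxm : sfx alpha m = 0.
Proof. by rewrite /sfx big_pred0 // => k; rewrite leqNgt ltn_ord. Qed.

Lemma rr_s k : rr alpha k * sfx alpha k = alpha k.
Proof.
rewrite /rr; have [e|nz] := eqVneq (sfx alpha k) 0.
  rewrite e mulr0; apply/esym/eqP; rewrite eq_le a0 andbT.
  have := sfxS k; have := sfx_ge0 k.+1; rewrite e => h1 h2. lra.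
by rewrite mulfVK.
Qed.

Lemma rr_s1 k : (1 - rr alpha k) * sfx alpha k = sfx alpha k.+1.
Proof. rewrite mulrBl mul1r rr_s (sfxS k); lra. Qed.

Lemma rr_ge0 k : 0 <= rr alpha k.
Proof. by rewrite /rr divr_ge0 // sfx_ge0. Qed.

Lemma rr_le1 k : rr alpha k <= 1.
Proof.
rewrite /rr; have [->|nz] := eqVneq (sfx alpha k) 0; first by rewrite invr0 mulr0.
have sp : 0 < sfx alpha k by rewrite lt_def nz sfx_ge0.
rewrite ler_pdivrMr // mul1r (sfxS k); have := sfx_ge0 k.+1; lra.
Qed.

Lemma prod_rr i : (i <= m)%N ->
  \prod_(k < m | (k < i)%N) (1 - rr alpha k) = sfx alpha i.
Proof.
elim: i => [_|i IH lim].
  by rewrite big_pred0 // sfx0.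
have i0 : (i < m)%N by [].
rewrite (bigD1 (Ordinal i0)) //= -(rr_s1 (Ordinal i0)) /= -IH ?(ltnW lim) //.
congr (_ * _); apply: eq_bigl => k.
by rewrite -val_eqE /= ltnS leq_eqVlt; case: ltngtP.
Qed.


Lemma pp_bd k : 0 < pp alpha k < 1.
Proof. rewrite /pp; case: ifP => // _; apply/andP; split; lra. Qed.

Lemma sum_stop k : \sum_(b | stopb alpha k b) ww alpha k b = rr alpha k.
Proof.
rewrite big_mkcond big_bool /= /stopb /ww /pp.
have := rr_ge0 k; have := rr_le1 k.
case: eqP => [->|h0]; first by rewrite addr0.
case: eqP => [->|h1] /=; first by lra.
move=> h2 h3; have -> : (0 < rr alpha k < 1) by apply/andP; split; rewrite lt_def ?h2 ?h3 ?andbT; apply/eqP => // /esym.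
by rewrite addr0.
Qed.

Lemma sum_nstop k : \sum_(b | ~~ stopb alpha k b) ww alpha k b = 1 - rr alpha k.
Proof.
rewrite big_mkcond big_bool /=.
have := sum_stop k; rewrite big_mkcond big_bool /=.
rewrite /ww; case: (stopb alpha k true); case: (stopb alpha k false) => /=; lra.
Qed.

Lemma sum_all k : \sum_(b | true) ww alpha k b = 1.
Proof. by rewrite big_bool /ww /=; lra. Qed.

Definition QQ (i k : 'I_m) (b : bool) : bool :=
  if (k < i)%N then ~~ stopb alpha k b else if k == i then stopb alpha k b else true.

Lemma sum_EE i : \sum_(h : m.-tuple bool | EE alpha i h) \prod_k ww alpha k (tnth h k) = alpha i.
Proof.
rewrite (eq_bigl (fun h => [forall k, QQ i k (tnth h k)])); last first.
  move=> h; rewrite /EE /QQ; apply/andP/forallP.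
    case=> hs /forallP hl k; case: ltnP => hk; first by have := hl k; rewrite hk.
    by case: eqP => // ->.
  move=> H; split; first by have := H i; rewrite ltnn eqxx.
  apply/forallP => k; apply/implyP => hk; by have := H k; rewrite hk.
rewrite sum_tuple_prod (bigD1 i) //= {1}/QQ ltnn eqxx sum_stop.
rewrite (eq_bigr (fun k : 'I_m => if (k < i)%N then 1 - rr alpha k else 1)); last first.
  move=> k /negbTE kn; rewrite /QQ kn; case: ltnP => _; first by rewrite sum_nstop.
  by rewrite (eq_bigl xpredT) // sum_all.
rewrite -big_mkcondr /= (eq_bigl (fun k : 'I_m => (k < i)%N)); last first.
  move=> k; apply/andP/idP => [[]//|hk]; split => //; apply/eqP => e; by rewrite e ltnn in hk.
rewrite prod_rr 1?ltnW //; exact: rr_s.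
Qed.

Lemma ex_rr1 : exists k, rr alpha k = 1.
Proof.
have := @prod_rr m (leqnn m); rewrite sfxm => /eqP /prodf_eq0 [k _].
by rewrite subr_eq0 => /eqP e; exists k.
Qed.

Lemma ex_EE h : exists i, EE alpha i h.
Proof.
have [k0 hk0] := ex_rr1.
have P0 : stopb alpha k0 (tnth h k0) by rewrite /stopb hk0 oner_eq0 eqxx.
case: (@arg_minnP _ k0 (fun k : 'I_m => stopb alpha k (tnth h k)) (fun k : 'I_m => nat_of_ord k) P0) => i hi hmin.
exists i; rewrite /EE hi; apply/forallP => k; apply/implyP => hk.
by apply/negP => /hmin; rewrite leqNgt hk.
Qed.

Lemma EE_uniq h i j : EE alpha i h -> EE alpha j h -> i = j.
Proof.
move=> /andP [si /forallP fi] /andP [sj /forallP fj].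
apply/val_inj; case: (ltngtP i j) => // hij.
  by have := fj i; rewrite hij si.
by have := fi j; rewrite hij sj.
Qed.

End P.

Lemma sum_tuple_prodT (R : realType) n (F : 'I_n -> bool -> R) :
 \sum_(t : n.-tuple bool) \prod_i F i (tnth t i) = \prod_i \sum_b F i b.
Proof.
rewrite -(@sum_tuple_prod R n (fun _ _ => true)); apply: eq_bigl => t.
by apply/esym/forallP.
Qed.

Lemma rbm_marg (R : realType) m n (p : 'I_m -> R) (hp : forall k, 0 < p k < 1)
  (v : m.-tuple bool) :
  \sum_(h : n.-tuple bool)
     rbm (0 : 'M[R]_(m,n)) (fun k => - ln (p k / (1 - p k))) (fun _ => 0) v h
  = \prod_k (if tnth v k then p k else 1 - p k).
Proof.
set bb := fun k : 'I_m => - ln _.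
have En : forall v h, rbm_energy (0 : 'M[R]_(m,n)) bb (fun _ => 0) v h
    = \sum_k (tnth v k)%:R * bb k.
  move=> v' h; rewrite /rbm_energy.
  rewrite [X in X + _ + _]big1 ?add0r; last first.
    by move=> i _; apply: big1 => j _; rewrite mxE mulr0 mul0r.
  by rewrite [X in _ + X]big1 ?addr0 // => j _; rewrite mulr0.
pose FF k (b : bool) := if b then p k / (1 - p k) else 1.
have Ex : forall v : m.-tuple bool, expR (- \sum_k (tnth v k)%:R * bb k) = \prod_k FF k (tnth v k).
  move=> v'; rewrite -sumrN expR_sum; apply: eq_bigr => k _.
  rewrite /FF /bb; case: (tnth v' k) => /=.
    rewrite mul1r opprK lnK //; have := hp k => /andP [h1 h2].
    by rewrite posrE divr_gt0 // subr_gt0.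
  by rewrite mul0r oppr0 expR0.
rewrite /rbm /rbm_partition.
under [in LHS]eq_bigr => h _ do rewrite En Ex.
have Y : \sum_(v0 : m.-tuple bool) \sum_(h0 : n.-tuple bool)
    expR (- rbm_energy (0 : 'M[R]_(m,n)) bb (fun _ => 0) v0 h0)
   = (\prod_k (1 - p k)^-1) *+ #|{: n.-tuple bool}|.
  rewrite (eq_bigr (fun v0 : m.-tuple bool => \sum_(h0 : n.-tuple bool) \prod_k FF k (tnth v0 k))); last first.
    by move=> v0 _; apply: eq_bigr => h0 _; rewrite En Ex.
  under eq_bigr => v0 _ do rewrite sumr_const.
  rewrite sumrMnl sum_tuple_prodT; congr (_ *+ _).
  apply: eq_bigr => k _; rewrite big_bool /FF; have := hp k => /andP [h1 h2].
    change (p k / (1 - p k) + 1 = (1 - p k)^-1).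
  have hn : 1 - p k != 0 by rewrite subr_eq0 gt_eqF.
  by field.
rewrite Y sumr_const.
rewrite -(mulr_natr (\prod_k (1 - p k)^-1)) -(mulr_natr (_ / _)) prodfV.
have Nn : (#|{: n.-tuple bool}|%:R : R) != 0.
  by rewrite pnatr_eq0 -lt0n card_tuple card_bool expn_gt0.
have Pn : \prod_k (1 - p k) != 0.
  by apply/prodf_neq0 => k _; have := hp k => /andP [h1 h2]; rewrite subr_eq0 gt_eqF.
rewrite [X in _ * X%:R = _](_ : _ = #|{: n.-tuple bool}|); last by apply: eq_card.
rewrite invfM invrK mulrA divfK //.
rewrite -big_split /=; apply: eq_bigr => k _; rewrite /FF.
have := hp k => /andP [h1 h2].
case: (tnth v k); last by rewrite mul1r.
by field; lra.
Qed.

Lemma iint0 (R : realType) n : iint (fun _ : n.-tuple R => 0%E) = 0%E.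
Proof.
elim: n => [//|n IH] /=.
rewrite IH; exact: integral0.
Qed.

Lemma LqNorm0 (R : realType) n (q : \bar R) (eps : R) : (1 <= q)%E -> 0 < eps ->
  (LqNorm q (fun _ : n.-tuple R => 0%R) <= eps%:E)%E.
Proof.
move=> hq he; case: q hq => [r||] //= hr.
  rewrite lee_fin in hr.
  rewrite normr0 powR0; last by apply/eqP => e; rewrite e in hr; lra.
  rewrite iint0 /= powR0; first by rewrite lee_fin ltW.
  by rewrite invr_neq0 //; apply/eqP => e; rewrite e in hr; lra.
apply: ge_ereal_sup => _ [x _ <-]; by rewrite normr0 lee_fin ltW.
Qed.

Theorem lemma1 (R : realType) (d m : nat) (q : \bar R) (sigma : R)
  (phi : d.-tuple R -> R) :
  (1 <= q)%E -> 0 < sigma -> prob_density phi -> (LqNorm q phi < +oo)%E ->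
  forall (alpha : 'I_m -> R) (mu : 'I_m -> d.-tuple R),
    (forall i, 0 <= alpha i <= 1) -> \sum_(i < m) alpha i = 1 ->
    forall eps : R, 0 < eps ->
      exists p : d.-tuple R -> R,
        in_DBN m m.+1 phi p /\
        (LqNorm q (fun x : d.-tuple R =>
                     (\sum_(i < m) alpha i * shift_scale phi (mu i) sigma x - p x)%R)
           <= eps%:E)%E.
Proof.
move=> hq hs hphi hphiq alpha mu ha hsum eps heps.
have a0 : forall i, 0 <= alpha i by move=> i; case/andP: (ha i).
have [k0 _] := @ex_rr1 _ _ alpha a0 hsum.
pose mu' (h : m.-tuple bool) := if [pick i | EE alpha i h] is Some i then mu i else mu k0.
exists (dbn_visible phi sigma mu' (0 : 'M[R]_(m, m.+1))
   (fun k => - ln (pp alpha k / (1 - pp alpha k))) (fun _ => 0)).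
split.
  exists sigma; split => //; do 4 eexists; reflexivity.
have -> : (fun x : d.-tuple R => (\sum_(i < m) alpha i * shift_scale phi (mu i) sigma x -
   dbn_visible phi sigma mu' (0 : 'M[R]_(m, m.+1))
   (fun k => - ln (pp alpha k / (1 - pp alpha k))) (fun _ => 0) x)%R) = (fun _ => 0%R).
  apply: funext => x; rewrite /dbn_visible.
  rewrite (eq_bigr (fun h1 : m.-tuple bool => shift_scale phi (mu' h1) sigma x *
      \prod_k ww alpha k (tnth h1 k))); last first.
    by move=> h1 _; rewrite -mulr_sumr rbm_marg //; exact: pp_bd.
  apply/eqP; rewrite subr_eq0; apply/eqP.
  have key : forall h, shift_scale phi (mu' h) sigma x =
      \sum_i (EE alpha i h)%:R * shift_scale phi (mu i) sigma x.
    move=> h; rewrite /mu'; case: pickP => [i hi|hn].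
      rewrite (bigD1 i) //= hi mul1r big1 ?addr0 // => j hj.
      case: (boolP (EE alpha j h)) => e; last by rewrite mul0r.
      by have := @EE_uniq _ _ alpha h j i e hi; move/eqP: hj.
    by have [i hi] := @ex_EE _ _ alpha a0 hsum h; rewrite hn in hi.
  rewrite (eq_bigr (fun h : m.-tuple bool => \sum_i (EE alpha i h)%:R *
      shift_scale phi (mu i) sigma x * \prod_k ww alpha k (tnth h k))); last first.
    by move=> h _; rewrite key mulr_suml.
  rewrite exchange_big; apply: congr_big => // i _.
  rewrite -(@sum_EE _ _ alpha a0 hsum i) mulr_suml [LHS]big_mkcond.
  apply: eq_bigr => h _; case: (EE alpha i h); last by rewrite !mul0r.
  by rewrite mul1r mulrC.
exact: LqNorm0.
Qed.
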